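(* Let $p,d\ge1$ and $0\le r\le p$. For a $d$-tuple $\delta=(\sigma_1,\dots,\sigma_d)\in\mathbb P_p^d$ let $r(\delta)$ be the number of $s\in[p]$ such that $\{s\}$ is a block of every $\sigma_k$. Then $$\sum_{\delta=(\sigma_1,\dots,\sigma_d):\ \sigma_k>\dot0\ \forall k,\ r(\delta)=r}\ \prod_{k=1}^d|\mu(\dot0,\sigma_k)|\ \le\ \binom{p}{r}\,\big((p-r)!\big)^d.$$
   Context: $[p]=\{1,\dots,p\}$; $\mathbb P_p$ is the lattice of partitions of $[p]$ ordered by refinement, $\dot0$ the partition into singletons, $\sigma>\dot0$ means $\sigma\ne\dot0$. $\mu$ is the Möbius function of $\mathbb P_p$: $\mu(\rho,\rho)=1$ and $\sum_{\rho\le\tau\le\sigma}\mu(\rho,\tau)=0$ for $\rho<\sigma$. *)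

(* Defs.v *)
From mathcomp Require Import all_boot all_order all_algebra.
Set Implicit Arguments. Unset Strict Implicit. Unset Printing Implicit Defensive.
Import GRing.Theory Num.Theory.

Definition setparts (p : nat) : {set {set {set 'I_p}}} :=
  [set P : {set {set 'I_p}} | partition P [set: 'I_p]].

Definition refines (p : nat) (sigma tau : {set {set 'I_p}}) : bool :=
  [forall B in sigma, [exists C in tau, B \subset C]].

Definition part0 (p : nat) : {set {set 'I_p}} := [set [set i] | i : 'I_p].

(* The recursion descends along strict chains of the lattice, which have
   length < p+1, so the fuel p.+1 is always sufficient. *)
Fixpoint mobius_aux (p n : nat) (rho sigma : {set {set 'I_p}}) : int :=
  if rho == sigma then 1%R
  else if refines rho sigma then
    match n with
    | 0 => 0%R
    | n'.+1 =>
        (- \sum_(tau in setparts p |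
                   [&& refines rho tau, refines tau sigma & tau != sigma])
             mobius_aux n' rho tau)%R
    end
  else 0%R.

Definition mobius (p : nat) (rho sigma : {set {set 'I_p}}) : int :=
  mobius_aux p.+1 rho sigma.

Definition rdelta (p d : nat) (delta : {ffun 'I_d -> {set {set 'I_p}}}) : nat :=
  #|[set s : 'I_p | [forall k, [set s] \in delta k]]|.

(* Main.v *)
Require Import Defs.
From mathcomp Require Import all_boot all_order all_algebra all_fingroup.
From mathcomp Require Import zify.
Set Implicit Arguments. Unset Strict Implicit. Unset Printing Implicit Defensive.
Import Order.TTheory GRing.Theory Num.Theory.

Section S.
Variable p : nat.
Local Notation T := 'I_p.

Lemma porbits_part (s : {perm T}) : porbits s \in setparts p.
Proof.
rewrite inE.
have -> : porbits s = preim_partition (porbit s) [set: T].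
  rewrite /porbits /preim_partition /equivalence_partition.
  apply/setP => B; apply/imsetP/imsetP => [[x _ ->]|[x _ ->]]; exists x => //;
  apply/setP => y; rewrite !inE eq_porbit_mem porbit_sym //.
exact: preim_partitionP.
Qed.

Lemma porbit_fix (s : {perm T}) x : s x = x -> porbit s x = [set x].
Proof.
move=> sx; apply/setP => y; rewrite inE; apply/porbitP/eqP => [[i ->]|->].
  elim: i => [|i IH]; first by rewrite expg0 perm1.
  by rewrite expgSr permM IH sx.
by exists 0; rewrite expg0 perm1.
Qed.

Lemma set1_porbits (s : {perm T}) x : ([set x] \in porbits s) = (s x == x).
Proof.
apply/imsetP/eqP => [[y _ e]|sx]; last by exists x; rewrite // porbit_fix.
have : x \in porbit s y by rewrite -e set11.
rewrite -eq_porbit_mem => /eqP e2.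
have : s x \in porbit s x by have := mem_porbit s 1 x; rewrite expg1.
by rewrite e2 -e inE => /eqP.
Qed.


Lemma partsP (s : {set {set T}}) : s \in setparts p ->
  [/\ cover s = [set: T], trivIset s & set0 \notin s].
Proof. by rewrite inE => /and3P[/eqP -> ? ?]. Qed.

Lemma pblock_in (s : {set {set T}}) x : s \in setparts p -> pblock s x \in s.
Proof. by case/partsP=> c _ _; apply: pblock_mem; rewrite c inE. Qed.

Lemma mem_pblock' (s : {set {set T}}) x : s \in setparts p -> x \in pblock s x.
Proof. by case/partsP=> c _ _; rewrite mem_pblock c inE. Qed.

Lemma refinesP (s : {set {set T}}) (pi : {perm T}) : s \in setparts p ->
  refines (porbits pi) s = [forall x, pi x \in pblock s x].
Proof.
move=> sP; have [c tI n0] := partsP sP.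
apply/forall_inP/forallP => [H x | H B /imsetP[x _ ->]].
  have xin : porbit pi x \in porbits pi by apply/imsetP; exists x.
  have /existsP[C /andP[Cs sub]] := H _ xin.
  have xC : x \in C by apply: (subsetP sub); exact: porbit_id.
  rewrite (def_pblock tI Cs xC); apply: (subsetP sub).
  by have := mem_porbit pi 1 x; rewrite expg1.
apply/existsP; exists (pblock s x); rewrite pblock_in //=.
apply/subsetP => y /porbitP[i ->]; elim: i => [|i IH].
  by rewrite expg0 perm1 mem_pblock'.
rewrite expgSr permM -(same_pblock tI IH); exact: H.
Qed.

Lemma refines_part0 (s : {set {set T}}) : s \in setparts p -> refines (part0 p) s.
Proof.
move=> sP; apply/forall_inP => B /imsetP[i _ ->]; apply/existsP.
by exists (pblock s i); rewrite pblock_in // sub1set mem_pblock'.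
Qed.

Lemma card_parts (s : {set {set T}}) : s \in setparts p -> #|s| <= p.
Proof.
move=> sP; have := sP; rewrite inE => /card_partition => e.
rewrite -[X in _ <= X]card_ord -cardsT e.
rewrite -sum1_card; apply: leq_sum => B Bs; rewrite card_gt0.
by case/partsP: sP => _ _ n0; apply: contraNneq n0 => <-.
Qed.

Lemma card_refine (t s : {set {set T}}) : t \in setparts p -> s \in setparts p ->
  refines t s -> t != s -> #|s| < #|t|.
Proof.
move=> tP sP ref neq; have [ct tIt n0t] := partsP tP; have [cs tIs n0s] := partsP sP.
pose f (B : {set T}) := if [pick x in B] is Some x then pblock s x else set0.
have fB B : B \in t -> [/\ B \subset f B, f B \in s & forall x, x \in B -> pblock s x = f B].
  move=> Bt; have /forall_inP/(_ B Bt)/existsP[C /andP[Cs BC]] := ref.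
  have px x : x \in B -> pblock s x = C by move=> xB; apply: def_pblock => //; exact: (subsetP BC).
  have /set0Pn[y yB] : B != set0 by apply: contraNneq n0t => <-.
  rewrite /f; case: pickP => [z zB|]; last by move=> /(_ y); rewrite yB.
  by rewrite (px _ zB).
have pbt x : pblock t x \in t by apply: pblock_in.
have xpbt x : x \in pblock t x by apply: mem_pblock'.
have fpb x : f (pblock t x) = pblock s x by have [_ _ ->] := fB _ (pbt x).
have sE : s = f @: t.
  apply/setP => C; apply/idP/imsetP => [Cs|[B Bt ->]]; last by have [] := fB B Bt.
  have /set0Pn[x xC] : C != set0 by apply: contraNneq n0s => <-.
  by exists (pblock t x) => //; rewrite fpb (def_pblock tIs Cs xC).
rewrite ltn_neqAle {2}sE leq_imset_card andbT.
apply: contra neq => /eqP est.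
have inj : {in t &, injective f}.
  by apply/imset_injP; rewrite -sE est.
have st : s \subset t.
  apply/subsetP => C Cs.
  have /set0Pn[x xC] : C != set0 by apply: contraNneq n0s => <-.
  have Ce : C = pblock t x.
    apply/eqP; rewrite eqEsubset; apply/andP; split; last first.
      by have [sub _ _] := fB _ (pbt x); rewrite fpb (def_pblock tIs Cs xC) in sub.
    apply/subsetP => y yC; suff -> : pblock t x = pblock t y by [].
    apply: inj => //; rewrite !fpb (def_pblock tIs Cs xC) (def_pblock tIs Cs yC) //.
  by rewrite Ce.
rewrite eq_sym eqEcard st /=; by rewrite est.
Qed.

Open Scope ring_scope.
Definition sgnp (pi : {perm T}) : int := (-1) ^+ odd_perm pi.
Definition cf (s : {set {set T}}) : int := \sum_(pi : {perm T} | porbits pi == s) sgnp pi.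

Lemma porbits1 : porbits (1 : {perm T}) = part0 p.
Proof.
apply/setP => B; apply/imsetP/imsetP => [[x _ ->]|[x _ ->]]; exists x => //;
  by rewrite porbit_fix // perm1.
Qed.

Lemma porbits_eq0 (pi : {perm T}) : (porbits pi == part0 p) = (pi == 1%g).
Proof.
apply/eqP/eqP => [e|->]; last exact: porbits1.
apply/permP => x; rewrite perm1; apply/eqP; rewrite -set1_porbits e.
by apply/imsetP; exists x.
Qed.

Lemma cf_part0 : cf (part0 p) = 1.
Proof.
rewrite /cf (eq_bigl (pred1 1%g)) ?big_pred1_eq; last by move=> pi; rewrite porbits_eq0.
by rewrite /sgnp odd_perm1.
Qed.

Lemma sum_refines_perm (s : {set {set T}}) : s \in setparts p ->
  \sum_(t in setparts p | refines t s) cf t =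
  \sum_(pi : {perm T} | refines (porbits pi) s) sgnp pi.
Proof.
move=> sP; symmetry.
rewrite (partition_big (fun pi : {perm T} => porbits pi) (fun t => (t \in setparts p) && refines t s)) /=; last first.
  by move=> pi H; rewrite porbits_part H.
apply: eq_bigr => t /andP[tP ref]; apply: eq_bigl => pi.
by case: (eqVneq (porbits pi) t) => [->|]; rewrite ?ref ?andbF ?andbT.
Qed.

Lemma sum_stab_zero (s : {set {set T}}) : s \in setparts p -> s != part0 p ->
  \sum_(pi : {perm T} | [forall x, pi x \in pblock s x]) sgnp pi = 0.
Proof.
move=> sP ns0; have [c tI n0] := partsP sP.
have [/existsP[a /existsP[b /andP[nab bpa]]]|none] :=
  boolP [exists a, exists b, (a != b) && (b \in pblock s a)]; last first.
  case/eqP: ns0; apply/eqP; rewrite eqEsubset; apply/andP; split.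
    apply/subsetP => C Cs; have /set0Pn[x xC] : C != set0 by apply: contraNneq n0 => <-.
    apply/imsetP; exists x => //; apply/setP => y; rewrite inE.
    apply/idP/eqP => [yC|->//]; apply/eqP; apply: contraNT none => nxy.
    by apply/existsP; exists x; apply/existsP; exists y; rewrite eq_sym nxy (def_pblock tI Cs xC).
  apply/subsetP => C /imsetP[x _ ->].
  suff <- : pblock s x = [set x] by apply: pblock_in.
  apply/setP => y; rewrite inE; apply/idP/eqP => [ypx|->]; last exact: mem_pblock'.
  apply/eqP; apply: contraNT none => nxy.
  by apply/existsP; exists x; apply/existsP; exists y; rewrite eq_sym nxy.
pose t := tperm a b.
have key y : t y \in pblock s y.
  rewrite /t; case: tpermP => [->|->|_ _]; last exact: mem_pblock'.
    exact: bpa.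
  by rewrite (same_pblock tI bpa) mem_pblock'.
have keyb y : pblock s (t y) = pblock s y by apply: same_pblock => //.
have stab_mul (pi : {perm T}) : [forall x, pi x \in pblock s x] ->
    [forall x, (pi * t)%g x \in pblock s x].
  move=> /forallP H; apply/forallP => x; rewrite permM.
  by rewrite -(same_pblock tI (H x)) key.
have stabE (pi : {perm T}) : [forall x, (pi * t)%g x \in pblock s x] =
    [forall x, pi x \in pblock s x].
  apply/idP/idP => [H|]; last exact: stab_mul.
  have e : (pi * t * t)%g = pi by apply/permP => y; rewrite !permM /t tpermK.
  by have := stab_mul _ H; rewrite e.
set S := (X in X = 0).
have : S = - S.
  rewrite {1}/S (reindex_inj (mulIg t)) /= -sumrN.
  apply: eq_big => pi; first exact: stabE.
  by move=> _; rewrite /sgnp odd_permM odd_tperm nab signr_addb expr1 mulrN1.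
lia.
Qed.

Lemma refines_refl (s : {set {set T}}) : refines s s.
Proof. by apply/forall_inP => B Bs; apply/existsP; exists B; rewrite Bs subxx. Qed.

Lemma mob_eq n (s : {set {set T}}) : s \in setparts p -> (p - #|s| < n)%N ->
  mobius_aux n (part0 p) s = cf s.
Proof.
elim: n s => [//|n IH] s sP lt /=.
have [<-|ns0] := eqVneq (part0 p) s; first by rewrite cf_part0.
rewrite refines_part0 //.
have H := sum_refines_perm sP.
rewrite (eq_bigl _ _ (fun pi => refinesP pi sP)) sum_stab_zero // 1?eq_sym // in H.
rewrite (bigD1 s) /= ?sP ?refines_refl // in H.
apply/eqP; rewrite eq_sym -addr_eq0; apply/eqP; rewrite -[RHS]H; congr (_ + _).
apply: eq_big => t.
  by rewrite andbA; case: (t \in setparts p) / idP => // tP; rewrite refines_part0.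
case/andP => tP /and3P[_ ref nts]; apply: IH => //.
have := card_refine tP sP ref nts; have := card_parts tP; lia.
Qed.

Lemma mobius_cf (s : {set {set T}}) : s \in setparts p -> mobius (part0 p) s = cf s.
Proof. move=> sP; apply: mob_eq => //; lia. Qed.

Close Scope ring_scope.
Definition Nc (s : {set {set T}}) : nat := \sum_(pi : {perm T}) (porbits pi == s).

Lemma abs_mob_le (s : {set {set T}}) : s \in setparts p -> `|mobius (part0 p) s|%N <= Nc s.
Proof.
move=> sP; rewrite mobius_cf // -lez_nat abszE /cf /Nc.
apply: (le_trans (ler_norm_sum _ _ _)).
rewrite -natz natr_sum [X in (X <= _)%R]big_mkcond /=; apply: ler_sum => pi _.
by case: (porbits pi == s); rewrite /sgnp ?normrX ?normrN1 ?expr1n.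
Qed.
End S.

Lemma prod_b2n (I : finType) (b : I -> bool) : \prod_(i : I) (b i : nat) = [forall i, b i].
Proof.
case: forallP => [H|/forallP/forallPn[i /negbTE bi]]; first by rewrite big1 // => i _; rewrite H.
by rewrite (bigD1 i) //= bi.
Qed.

Theorem mainTheorem7 (p d r : nat) (hp : 1 <= p) (hd : 1 <= d) (hr : r <= p) :
  \sum_(delta : {ffun 'I_d -> {set {set 'I_p}}} |
          [forall k, (delta k \in setparts p) && (delta k != part0 p)]
          && (rdelta delta == r))
     \prod_(k < d) `|mobius (part0 p) (delta k)|%N
  <= 'C(p, r) * ((p - r)`!) ^ d.
Proof.
pose PO (f : {ffun 'I_d -> {perm 'I_p}}) := [ffun k => porbits (f k)].
pose Fix (f : {ffun 'I_d -> {perm 'I_p}}) := [set s : 'I_p | [forall k, f k s == s]].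
apply: (@leq_trans (\sum_(delta : {ffun 'I_d -> {set {set 'I_p}}} | rdelta delta == r)
     \prod_(k < d) Nc (delta k))).
  rewrite [X in X <= _]big_mkcond [X in _ <= X]big_mkcond /=; apply: leq_sum => delta _.
  case: forallP => [H|_] /=; last by case: ifP.
  case: ifP => // _; apply: leq_prod => k _; apply: abs_mob_le; by case/andP: (H k).
have E1 : \sum_(delta : {ffun 'I_d -> {set {set 'I_p}}} | rdelta delta == r)
     \prod_(k < d) Nc (delta k) = \sum_(f : {ffun 'I_d -> {perm 'I_p}}) (#|Fix f| == r).
  rewrite /Nc; under eq_bigr => delta _ do rewrite bigA_distr_bigA /=.
  rewrite exchange_big /=; apply: eq_bigr => f _.
  under eq_bigr => delta _ do rewrite prod_b2n.
  have rdPO : rdelta (PO f) = #|Fix f|.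
    rewrite /rdelta; apply: eq_card => x; rewrite !inE; apply: eq_forallb => k.
    by rewrite ffunE set1_porbits.
  have fe (delta : {ffun 'I_d -> {set {set 'I_p}}}) : [forall i, porbits (f i) == delta i] = (PO f == delta).
    apply/forallP/eqP => [H|<- i]; last by rewrite ffunE.
    by apply/ffunP => i; rewrite ffunE; apply/eqP.
  under eq_bigr => delta _ do rewrite fe.
  rewrite -rdPO; case: (boolP (rdelta (PO f) == r)) => PH.
    rewrite (bigD1 (PO f)) //= eqxx big1 // => delta /andP[_ nd].
    by rewrite eq_sym (negbTE nd).
  rewrite big1 // => delta dr; case: eqP => // e.
  by rewrite e dr in PH.
rewrite E1.
have E2 : \sum_f (#|Fix f| == r) = \sum_(f | #|Fix f| == r) 1.
  by rewrite [RHS]big_mkcond; apply: eq_bigr => f _; case: ifP.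
rewrite E2 (partition_big Fix (fun S : {set 'I_p} => #|S| == r)) //=.
apply: (@leq_trans (\sum_(S : {set 'I_p} | #|S| == r) ((p - r)`! ^ d))).
  apply: leq_sum => S /eqP cS.
  have <- : #|@ffun_on_mem 'I_d _ (mem (perm_on (~: S)))| = (p - r)`! ^ d.
    rewrite card_ffun_on card_perm card_ord; congr (_`! ^ _).
    have := cardsC S; rewrite card_ord.
rewrite cS; lia.
  rewrite -sum1_card; apply: sub_le_big => [//|x y|f /andP[_ /eqP fS]]; first exact: leq_addr.
  apply/forallP => k; apply/subsetP => x; rewrite !inE; apply: contra => xS.
  by rewrite -fS inE in xS; move/forallP: xS => /(_ k).
rewrite sum_nat_const -[X in 'C(X, _)]card_ord -card_draws.
by apply: leq_mul => //; apply: subset_leq_card; apply/subsetP => S; rewrite !inE.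
Qed.
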